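(* Let $p\ge2$ and consider the dynamic panel logit AR($p$) model with $T=3$: binary outcomes $Y_{1-p},\dots,Y_0,Y_1,Y_2,Y_3\in\{0,1\}$, regressors $X=(X_1,X_2,X_3)\in\mathbb{R}^{K\times3}$, fixed effect $A\in\mathbb{R}$, with, for $t\in\{1,2,3\}$, $$\Pr(Y_t=1\mid Y_{1-p},\dots,Y_{t-1},X,A)=\frac{\exp(X_t'\beta_0+\sum_{\ell=1}^pY_{t-\ell}\gamma_{0,\ell}+A)}{1+\exp(X_t'\beta_0+\sum_{\ell=1}^pY_{t-\ell}\gamma_{0,\ell}+A)}$$ and true parameters $\beta_0\in\mathbb{R}^K$, $\gamma_0\in\mathbb{R}^p$. Let $Y^{(0)}=(Y_{1-p},\dots,Y_0)$, let $0_r$ and $1_r$ denote the $r$-vectors of zeros and ones, and let $x_{ts}=x_t-x_s$. For $y=(y_1,y_2,y_3)$ define $$m_{(0_p)}=\begin{cases}e^{x_{12}'\beta}&y=(0,1,0),\\ e^{x_{12}'\beta-\gamma_1}&y=(0,1,1),\\ -1&(y_1,y_2)=(1,0),\\0&\text{otherwise},\end{cases}\qquad m_{(0,1_{p-1})}=\begin{cases}-1&(y_1,y_2)=(0,1),\\ e^{x_{21}'\beta-\gamma_1+\gamma_p}&y=(1,0,0),\\ e^{x_{21}'\beta+\gamma_p}&y=(1,0,1),\\0&\text{otherwise},\end{cases}$$ $$m_{(1,0_{p-1})}=\begin{cases}e^{x_{12}'\beta+\gamma_p}&y=(0,1,0),\\ e^{x_{12}'\beta-\gamma_1+\gamma_p}&y=(0,1,1),\\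 -1&(y_1,y_2)=(1,0),\\0&\text{otherwise},\end{cases}\qquad m_{(1_p)}=\begin{cases}-1&(y_1,y_2)=(0,1),\\ e^{x_{21}'\beta-\gamma_1}&y=(1,0,0),\\ e^{x_{21}'\beta}&y=(1,0,1),\\0&\text{otherwise},\end{cases}$$ as functions of $(y,x,\beta,\gamma)$. Then for all $y^{(0)}\in\{0_p,(0,1_{p-1}),(1,0_{p-1}),1_p\}$, $(x_1,x_2)\in\mathbb{R}^{K\times2}$ and $\alpha\in\mathbb{R}$, $$\mathbb{E}\big[m_{y^{(0)}}(Y,X,\beta_0,\gamma_0)\mid Y^{(0)}=y^{(0)},X=(x_1,x_2,x_2),A=\alpha\big]=0,$$ where $Y=(Y_1,Y_2,Y_3)$.
   Context: The joint distribution of $(Y^{(0)},X,A)$ is unrestricted; only the conditional law of $(Y_1,Y_2,Y_3)$ given $(Y^{(0)},X,A)$ is specified by the model. The vector $(0,1_{p-1})$ has first entry (corresponding to $Y_{1-p}$) equal to $0$ and all others equal to $1$; similarly for $(1,0_{p-1})$. *)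

(* Defs.v *)
From Stdlib Require Import Reals List.
Import ListNotations.
Open Scope R_scope.

(* Vectors in R^K are functions nat -> R (entries 0..K-1 used). *)
Fixpoint dot (K : nat) (u v : nat -> R) : R :=
  match K with O => 0 | S k => dot k u v + u k * v k end.

Fixpoint sum1 (n : nat) (f : nat -> R) : R :=
  match n with O => 0 | S k => sum1 k f + f (S k) end.

Definition b2r (b : bool) : R := if b then 1 else 0.

Definition Lambda (z : R) : R := exp z / (1 + exp z).

(* Full outcome history indexed by position i: position i holds Y_{i+1-p}.
   So y0 i = Y_{1-p+i} for i < p, and Y_t (t = 1,2,3) sits at position p-1+t. *)
Definition hist (p : nat) (y0 : nat -> bool) (y1 y2 y3 : bool) (i : nat) : bool :=
  if Nat.ltb i p then y0 i
  else if Nat.eqb i p then y1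
  else if Nat.eqb i (S p) then y2 else y3.

(* sum_{l=1}^p Y_{t-l} gamma_l  (gamma indexed 1..p) *)
Definition lagsum (p : nat) (gamma : nat -> R) (h : nat -> bool) (t : nat) : R :=
  sum1 p (fun l => b2r (h (p + t - 1 - l)%nat) * gamma l).

Definition lindex (p K : nat) (beta gamma : nat -> R) (h : nat -> bool)
  (x : nat -> nat -> R) (alpha : R) (t : nat) : R :=
  dot K (x t) beta + lagsum p gamma h t + alpha.

Definition pr_t (p K : nat) (beta gamma : nat -> R) (h : nat -> bool)
  (x : nat -> nat -> R) (alpha : R) (t : nat) (yt : bool) : R :=
  let L := Lambda (lindex p K beta gamma h x alpha t) in
  if yt then L else 1 - L.

Definition condprob (p K : nat) (beta gamma : nat -> R) (y0 : nat -> bool)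
  (x : nat -> nat -> R) (alpha : R) (y1 y2 y3 : bool) : R :=
  let h := hist p y0 y1 y2 y3 in
  pr_t p K beta gamma h x alpha 1 y1 *
  pr_t p K beta gamma h x alpha 2 y2 *
  pr_t p K beta gamma h x alpha 3 y3.

Definition bools : list bool := true :: false :: nil.

Definition condexp (p K : nat) (beta gamma : nat -> R) (y0 : nat -> bool)
  (x : nat -> nat -> R) (alpha : R) (m : bool -> bool -> bool -> R) : R :=
  fold_right Rplus 0 (map (fun y1 =>
  fold_right Rplus 0 (map (fun y2 =>
  fold_right Rplus 0 (map (fun y3 =>
    m y1 y2 y3 * condprob p K beta gamma y0 x alpha y1 y2 y3) bools)) bools)) bools).

Inductive init := I0p | I01 | I10 | I1p.

Definition y0_of (c : init) : nat -> bool :=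
  match c with
  | I0p => fun _ => false
  | I01 => fun i => negb (Nat.eqb i 0)
  | I10 => fun i => Nat.eqb i 0
  | I1p => fun _ => true
  end.

Definition mfun (c : init) (p K : nat) (x : nat -> nat -> R) (beta gamma : nat -> R)
  (y1 y2 y3 : bool) : R :=
  let x12 := dot K (x 1%nat) beta - dot K (x 2%nat) beta in
  let x21 := dot K (x 2%nat) beta - dot K (x 1%nat) beta in
  let g1 := gamma 1%nat in
  let gp := gamma p in
  match c with
  | I0p => match y1, y2, y3 with
           | false, true, false => exp x12
           | false, true, true => exp (x12 - g1)
           | true, false, _ => -1
           | _, _, _ => 0 end
  | I01 => match y1, y2, y3 with
           | false, true, _ => -1
           | true, false, false => exp (x21 - g1 + gp)
           | true, false, true => exp (x21 + gp)
           | _, _, _ => 0 end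
  | I10 => match y1, y2, y3 with
           | false, true, false => exp (x12 + gp)
           | false, true, true => exp (x12 - g1 + gp)
           | true, false, _ => -1
           | _, _, _ => 0 end
  | I1p => match y1, y2, y3 with
           | false, true, _ => -1
           | true, false, false => exp (x21 - g1)
           | true, false, true => exp x21
           | _, _, _ => 0 end
  end.

Definition Xstay (x1 x2 : nat -> R) : nat -> nat -> R :=
  fun t => if Nat.eqb t 1 then x1 else x2.

(* Main.v *)
Require Import Defs.
From Stdlib Require Import Reals Lia Lra.
Open Scope R_scope.

Lemma sum1_ext n f g : (forall l, (1 <= l <= n)%nat -> f l = g l) -> sum1 n f = sum1 n g.
Proof.
  induction n; intros H; simpl; [reflexivity|].
  rewrite IHn by (intros; apply H; lia). rewrite (H (S n)) by lia. reflexivity.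
Qed.

Lemma sum1_first n f : sum1 (S n) f = f 1%nat + sum1 n (fun l => f (S l)).
Proof.
  induction n; simpl in *; [ring|]. rewrite IHn. ring.
Qed.

Lemma sum1_scal n k f : sum1 n (fun l => k * f l) = k * sum1 n f.
Proof. induction n; simpl; [ring|]. rewrite IHn; ring. Qed.

Lemma hist_lt p y0 a b c i : (i < p)%nat -> hist p y0 a b c i = y0 i.
Proof. intros H; unfold hist. destruct (Nat.ltb_spec i p); [reflexivity|lia]. Qed.
Lemma hist_p p y0 a b c : hist p y0 a b c p = a.
Proof. unfold hist. rewrite Nat.ltb_irrefl, Nat.eqb_refl. reflexivity. Qed.
Lemma hist_Sp p y0 a b c : hist p y0 a b c (S p) = b.
Proof. unfold hist. destruct (Nat.ltb_spec (S p) p); [lia|].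
  destruct (Nat.eqb_spec (S p) p); [lia|]. rewrite Nat.eqb_refl. reflexivity. Qed.

Section LS.
Variables (r : nat) (g : nat -> R) (y0 : nat -> bool) (v : bool).
Hypothesis Hv : forall i, (1 <= i)%nat -> (i < S (S r))%nat -> y0 i = v.
Let H := sum1 r (fun l => g (S (S l))).

Lemma ls1 a b c : lagsum (S (S r)) g (hist (S (S r)) y0 a b c) 1
  = b2r (y0 0%nat) * g (S (S r)) + b2r v * (g 1%nat + g 2%nat + H - g (S (S r))).
Proof.
  unfold lagsum. change (sum1 (S (S r)) ?f) with (sum1 (S r) f + f (S (S r))).
  rewrite (sum1_ext (S r) _ (fun l => b2r v * g l)).
  2:{ intros l Hl. rewrite hist_lt by lia. rewrite Hv by lia. reflexivity. }
  rewrite sum1_scal.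
  replace (S (S r) + 1 - 1 - S (S r))%nat with 0%nat by lia.
  rewrite hist_lt by lia.
  assert (E : sum1 (S r) g + g (S (S r)) = g 1%nat + g 2%nat + H).
  { change (sum1 (S (S r)) g = g 1%nat + g 2%nat + H).
    rewrite sum1_first, sum1_first. unfold H. ring. }
  replace (sum1 (S r) g) with (g 1%nat + g 2%nat + H - g (S (S r))) by lra.
  ring.
Qed.

Lemma ls2 a b c : lagsum (S (S r)) g (hist (S (S r)) y0 a b c) 2
  = b2r a * g 1%nat + b2r v * (g 2%nat + H).
Proof.
  unfold lagsum. rewrite sum1_first.
  replace (S (S r) + 2 - 1 - 1)%nat with (S (S r)) by lia. rewrite hist_p.
  rewrite (sum1_ext (S r) _ (fun l => b2r v * g (S l))).
  2:{ intros l Hl. rewrite hist_lt by lia. rewrite Hv by lia. reflexivity. }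
  rewrite sum1_scal, sum1_first. unfold H. ring.
Qed.

Lemma ls3 a b c : lagsum (S (S r)) g (hist (S (S r)) y0 a b c) 3
  = b2r b * g 1%nat + b2r a * g 2%nat + b2r v * H.
Proof.
  unfold lagsum. rewrite sum1_first, sum1_first.
  replace (S (S r) + 3 - 1 - 1)%nat with (S (S (S r))) by lia. rewrite hist_Sp.
  replace (S (S r) + 3 - 1 - 2)%nat with (S (S r)) by lia. rewrite hist_p.
  rewrite (sum1_ext r _ (fun l => b2r v * g (S (S l)))).
  2:{ intros l Hl. rewrite hist_lt by lia. rewrite Hv by lia. reflexivity. }
  rewrite sum1_scal. unfold H. ring.
Qed.
End LS.

Theorem lemma5 (p K : nat) (hp : (2 <= p)%nat) (beta0 gamma0 : nat -> R)
  (c : init) (x1 x2 : nat -> R) (alpha : R) :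
  condexp p K beta0 gamma0 (y0_of c) (Xstay x1 x2) alpha
    (fun y1 y2 y3 => mfun c p K (Xstay x1 x2) beta0 gamma0 y1 y2 y3) = 0.
Proof.
  destruct p as [|[|r]]; [lia|lia|]. clear hp.
  assert (Hv : forall i, (1 <= i)%nat -> (i < S (S r))%nat ->
     y0_of c i = match c with I0p | I10 => false | _ => true end).
  { intros i H1 H2; destruct c; simpl; try reflexivity;
    (destruct i; [lia|reflexivity]). }
  unfold condexp, condprob, pr_t, lindex.
  cbn [bools List.map List.fold_right].
  rewrite !(ls1 r gamma0 _ _ Hv), !(ls2 r gamma0 _ _ Hv), !(ls3 r gamma0 _ _ Hv).
  set (H := sum1 r (fun l => gamma0 (S (S l)))).
  destruct c; cbn [mfun y0_of b2r Xstay Nat.eqb negb];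
  set (a := dot K x1 beta0); set (b := dot K x2 beta0);
  unfold Lambda;
  repeat rewrite ?Rmult_0_l, ?Rmult_1_l, ?Rplus_0_l, ?Rplus_0_r, ?Rmult_0_r;
  unfold Rminus;
  repeat rewrite ?exp_plus, ?exp_Ropp, ?Ropp_plus_distr, ?Ropp_involutive;
  set (ea := exp a); set (eb := exp b); set (e1 := exp (gamma0 1%nat));
  set (e2 := exp (gamma0 2%nat)); set (ep := exp (gamma0 (S (S r))));
  set (eH := exp H); set (eal := exp alpha);
  assert (0 < ea) by apply exp_pos; assert (0 < eb) by apply exp_pos;
  assert (0 < e1) by apply exp_pos; assert (0 < e2) by apply exp_pos;
  assert (0 < ep) by apply exp_pos; assert (0 < eH) by apply exp_pos;
  assert (0 < eal) by apply exp_pos;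
  field; repeat split; apply Rgt_not_eq;
  repeat (apply Rplus_lt_0_compat || apply Rmult_lt_0_compat || apply Rinv_0_lt_compat
          || assumption || apply Rlt_0_1).
Qed.
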